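(* Let $U\subset(0,1)^m$ be open and let $b:U\to\mathbb{R}$ be given by $b(x)=ax^\mu=a\prod_{i=1}^m x_i^{\mu_i}$ for some $a\in\mathbb{R}$ and $\mu\in\mathbb{R}^m$, and suppose $b$ is $C^1$-bounded (i.e. $b$ and all its first-order partial derivatives are bounded on $U$). Then there exist $A,B>0$ depending only on $b$ such that the following holds: for every integer $r>0$, every integer $l\ge1$ and all $n_1,\ldots,n_m$ with $n_i\ge r^l$ for all $i$, letting $\phi:(0,1)^m\to(0,1)^m$, $\phi(x)=(x_1^{n_1},\ldots,x_m^{n_m})$, and $V=\phi^{-1}(U)$, the map $(b\circ\phi)^{1/r^{l-1}}:V\to\mathbb{R}$ is $(\max(n_1,\ldots,n_m)A,B,0)$-mild up to order $r$.
   Context: For $V\subset\mathbb{R}^d$ open, $A,B>0$, $C\ge0$, $r$ a positive integer: $g:V\to\mathbb{R}$ is $(A,B,C)$-mild up to order $r$ if it is $C^r$ and $|g^{(\nu)}(x)|\le B^{C+1}A^{|\nu|}|\nu|!^{C+1}$ for all $x\in V$ and all $\nu\in\mathbb{N}^d$ with $|\nu|\le r$, where $g^{(\nu)}=\partial^{|\nu|}g/\partial x_1^{\nu_1}\cdots\partial x_d^{\nu_d}$ and $|\nu|=\sum\nu_i$. *)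

(* Defs.v *)
From HB Require Import structures.
From mathcomp Require Import all_boot all_order all_algebra.
From mathcomp Require Import all_classical all_reals all_analysis.
Set Implicit Arguments. Unset Strict Implicit. Unset Printing Implicit Defensive.
Import Order.TTheory GRing.Theory Num.Theory.
Import numFieldNormedType.Exports.
Local Open Scope classical_set_scope.
Local Open Scope ring_scope.

Section Defs.
Variables (R : realType) (m : nat).

Definition ebasis (i : 'I_m) : 'rV[R]_m := delta_mx 0 i.

Definition partial (i : 'I_m) (f : 'rV[R]_m -> R) : 'rV[R]_m -> R :=
  fun x => 'D_(ebasis i) f x.

(* iterated partial derivative along a sequence of directions (first applied = last) *)
Definition ipartial (s : seq 'I_m) (f : 'rV[R]_m -> R) : 'rV[R]_m -> R :=
  foldr partial f s.

Definition pderiv (nu : 'I_m -> nat) (f : 'rV[R]_m -> R) : 'rV[R]_m -> R :=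
  foldr (fun i g => iter (nu i) (partial i) g) f (enum 'I_m).

Definition mabs (nu : 'I_m -> nat) : nat := (\sum_(i < m) nu i)%N.

Definition Cr (V : set 'rV[R]_m) (r : nat) (f : 'rV[R]_m -> R) : Prop :=
  forall s : seq 'I_m, (size s <= r)%N ->
    (forall x, V x -> {for x, continuous (ipartial s f)}) /\
    ((size s < r)%N -> forall x, V x -> forall i, derivable (ipartial s f) x (ebasis i)).

Definition mild (V : set 'rV[R]_m) (A B C : R) (r : nat) (g : 'rV[R]_m -> R) : Prop :=
  Cr V r g /\
  forall x, V x -> forall nu : 'I_m -> nat, (mabs nu <= r)%N ->
    `|pderiv nu g x| <= B `^ (C + 1) * A ^+ mabs nu * ((mabs nu)`!%:R) `^ (C + 1).

Definition C1_bounded (V : set 'rV[R]_m) (f : 'rV[R]_m -> R) : Prop :=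
  Cr V 1 f /\ exists M : R, forall x, V x ->
    `|f x| <= M /\ forall i, `|partial i f x| <= M.

Definition unit_cube : set 'rV[R]_m := [set x | forall i, 0 < x 0 i < 1].

Definition monomial (a : R) (mu : 'I_m -> R) : 'rV[R]_m -> R :=
  fun x => a * \prod_(i < m) (x 0 i) `^ (mu i).

Definition phi_map (n : 'I_m -> nat) (x : 'rV[R]_m) : 'rV[R]_m :=
  \row_i (x 0 i) ^+ (n i).

(* real k-th root of g, k > 0: sg(g) |g|^(1/k) (coincides with the real root
   whenever it is defined) *)
Definition kroot (k : nat) (g : 'rV[R]_m -> R) : 'rV[R]_m -> R :=
  fun x => Num.sg (g x) * `|g x| `^ (k%:R)^-1.

End Defs.

(* Main.v *)
Require Import Defs.
From HB Require Import structures.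
From mathcomp Require Import all_boot all_order all_algebra.
From mathcomp Require Import all_classical all_reals all_analysis.
From mathcomp Require Import ring lra.
Import Order.TTheory GRing.Theory Num.Theory.
Import numFieldNormedType.Exports.
Local Open Scope classical_set_scope.
Local Open Scope ring_scope.

Section S.
Variables (R : realType) (m : nat).
Implicit Types (x y : 'rV[R]_m).

Definition Fm (c : R) (b : 'I_m -> R) : 'rV[R]_m -> R :=
  fun x => c * \prod_(j < m) (x 0 j) `^ (b j).

Definition pos x := forall j, 0 < x 0 j.

Lemma ebasisE (i j : 'I_m) : ebasis R i 0 j = (j == i)%:R.
Proof. by rewrite /ebasis mxE eqxx. Qed.

Lemma Fm_slice c b i x h :
  Fm c b (h *: ebasis R i + x) =
  (c * \prod_(j < m | j != i) x 0 j `^ b j) * (h + x 0 i) `^ b i.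
Proof.
rewrite /Fm (bigD1 i) //= !mxE !eqxx /= mulr1.
rewrite [_ `^ b i * _]mulrC mulrA; congr (_ * _ * _); apply: eq_bigr => j /negbTE ji.
by rewrite !mxE ji /= mulr0 add0r.
Qed.

Lemma slice_derive (f : 'rV[R]_m -> R) (p : R -> R) x i :
  (forall h, f (h *: ebasis R i + x) = p (h + x 0 i)) ->
  'D_(ebasis R i) f x = 'D_1 p (x 0 i) /\
  (derivable f x (ebasis R i) <-> derivable p (x 0 i) 1).
Proof.
move=> H.
have E : (fun h : R => h^-1 *: ((f \o shift x) (h *: ebasis R i) - f x)) =
         (fun h : R => h^-1 *: ((p \o shift (x 0 i)) (h *: 1) - p (x 0 i))).
  have H0 := H 0; rewrite scale0r !add0r in H0.
  apply/funext => h /=; rewrite /shift /= H H0.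
  by rewrite [h *: 1]mulr1.
by rewrite /derive /derivable E.
Qed.

Lemma Fm_partial c b i x : pos x ->
  derivable (Fm c b) x (ebasis R i) /\
  partial i (Fm c b) x = Fm (c * b i) (fun j => b j - (j == i)%:R) x.
Proof.
move=> px.
set K := c * \prod_(j < m | j != i) x 0 j `^ b j.
have [E D] := @slice_derive (Fm c b) (fun t => K * t `^ b i) x i (Fm_slice c b i x).
have hd : is_derive (x 0 i) 1 (fun t => K * t `^ b i) (K * (b i * x 0 i `^ (b i - 1))).
  have := is_derive1_powR (b i) (px i) => hd.
  exact: is_deriveZ.
split; first by apply/D; exact: ex_derive.
rewrite /partial E derive_val /Fm (bigD1 i) //= eqxx /K.
rewrite [X in _ = _ * (_ * X)](eq_bigr (fun j => x 0 j `^ b j)); last by move=> j /negbTE ->; rewrite subr0.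
ring.
Qed.

Lemma near_pos x : pos x -> \forall y \near x, pos y.
Proof.
move=> px; apply: (@filter_forall _ _ (fun j (y : 'rV[R]_m) => 0 < y 0 j) (nbhs x) _) => j.
have := @coord_continuous R 1 m 0 j x _ (lt_nbhsr (px j)).
by [].
Qed.

Lemma powR_cont (b t : R) : 0 < t -> {for t, continuous (fun s : R => s `^ b)}.
Proof.
move=> t0; apply: differentiable_continuous; apply/derivable1_diffP.
by apply: (@derivable_powR R 1 b t); rewrite in_itv /= t0.
Qed.

Lemma Fm_cont c b x : pos x -> {for x, continuous (Fm c b)}.
Proof.
move=> px.
suff H : forall s : seq 'I_m,
  {for x, continuous (fun y : 'rV[R]_m => \prod_(j <- s) y 0 j `^ b j)}.
  have -> : Fm c b = (fun _ => c) \* (fun y : 'rV[R]_m => \prod_(j < m) y 0 j `^ b j) by [].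
  by apply: continuousM; [exact: cst_continuous | exact: H].
elim=> [|j s IH].
  rewrite (_ : (fun _ => _) = fun _ => 1); last by apply/funext => y; rewrite big_nil.
  exact: cst_continuous.
rewrite (_ : (fun _ => _) = (fun y : 'rV[R]_m => y 0 j `^ b j) \* (fun y => \prod_(j <- s) y 0 j `^ b j)); last first.
  by apply/funext => y; rewrite big_cons.
apply: continuousM => //.
apply: (@continuous_comp _ _ _ (fun y : 'rV[R]_m => y 0 j) (fun s : R => s `^ b j)); first exact: coord_continuous.
exact: powR_cont.
Qed.


Fixpoint dco (al : 'I_m -> R) (s : seq 'I_m) : R :=
  match s with nil => 1 | i :: s' => dco al s' * (al i - (count_mem i s')%:R) end.

Definition bet (al : 'I_m -> R) (s : seq 'I_m) : 'I_m -> R :=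
  fun j => al j - (count_mem j s)%:R.

Lemma Fm_ext c c' b b' : c = c' -> (forall j, b j = b' j) -> Fm c b = Fm c' b'.
Proof.
move=> -> E; apply/funext => y; rewrite /Fm; congr (_ * _); apply: eq_bigr => j _.
by rewrite E.
Qed.

Lemma near_Fm (g : 'rV[R]_m -> R) c al :
  (forall y, pos y -> g y = Fm c al y) ->
  forall s y, pos y -> \forall z \near y, ipartial s g z = Fm (c * dco al s) (bet al s) z.
Proof.
move=> Hg; elim=> [|i s IH] y py.
  near=> z; rewrite /= Hg; last by near: z; exact: near_pos.
  by rewrite mulr1 (@Fm_ext c c al (bet al [::])) // => j; rewrite /bet /= subr0.
near=> z.
have pz : pos z by near: z; exact: near_pos.
rewrite /= /partial (near_eq_derive _ (IH z pz)).
have [_ P] := Fm_partial (c * dco al s) (bet al s) i z pz. rewrite /partial in P. rewrite P.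
rewrite mulrA; congr Fm; apply/funext => j.
by rewrite /bet /= natrD opprD addrA eq_sym addrAC.
Unshelve. all: by end_near.
Qed.

Lemma ipartial_eq (g : 'rV[R]_m -> R) c al :
  (forall y, pos y -> g y = Fm c al y) ->
  forall s y, pos y -> ipartial s g y = Fm (c * dco al s) (bet al s) y.
Proof.
move=> Hg s y py; have N := near_Fm _ _ _ Hg s _ py. exact: (nbhs_singleton N).
Qed.

Lemma ipartial_reg (g : 'rV[R]_m -> R) c al :
  (forall y, pos y -> g y = Fm c al y) ->
  forall s y, pos y -> {for y, continuous (ipartial s g)} /\
     forall i, derivable (ipartial s g) y (ebasis R i).
Proof.
move=> Hg s y py; have N := near_Fm _ _ _ Hg s _ py; split.
  have E := ipartial_eq _ _ _ Hg s _ py.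
  have FF : Filter (nbhs y) by exact: nbhs_filter.
  have NE := (@near_eq_cvg _ _ (nbhs y) FF (Fm (c * dco al s) (bet al s)) (ipartial s g)).
  have NE' : {near nbhs y, Fm (c * dco al s) (bet al s) =1 ipartial s g}.
    by near=> z; rewrite (near N z).
  move: (NE NE') => /cvg_trans T. have := T _ (Fm_cont _ _ _ py). rewrite -E. exact.
move=> i; apply: (near_eq_derivable _ (proj1 (Fm_partial (c * dco al s) (bet al s) i y py))).
by near=> z; rewrite (near N z).
Unshelve. all: by end_near.
Qed.

Lemma pderivE (nu : 'I_m -> nat) (f : 'rV[R]_m -> R) :
  pderiv nu f = ipartial (flatten [seq nseq (nu i) i | i <- enum 'I_m]) f.
Proof.
rewrite /pderiv /ipartial; elim: (enum 'I_m) => [|i s IH] //=.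
rewrite foldr_cat IH; elim: (nu i) => [|n IHn] //=.
by rewrite IHn.
Qed.


Lemma dco_bound al s E : (forall j, `|al j| + 1 <= E) ->
  `|dco al s| <= E ^+ size s * (size s)`!%:R.
Proof.
move=> HE; elim: s => [|i s IH] /=; first by rewrite normr1 expr0 mul1r.
have E0 : 0 <= E by apply: le_trans (HE i); rewrite addr_ge0.
have hc : (count_mem i s <= size s)%N by apply: count_size.
have h1 : `|al i - (count_mem i s)%:R| <= E * (size s).+1%:R.
  apply: (le_trans (ler_normB _ _)); rewrite normr_nat.
  apply: (@le_trans _ _ ((`|al i| + 1) * (size s).+1%:R)); last first.
    by apply: ler_wpM2r => //; exact: ler0n.
  have : (count_mem i s)%:R <= (size s)%:R :> R by rewrite ler_nat.
  rewrite -addn1 natrD; have := normr_ge0 (al i); have : 0 <= (size s)%:R :> R by exact: ler0n.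
  move=> h2 h3 h4; nra.
rewrite normrM factS natrM exprS.
apply: (le_trans (ler_pM _ _ IH h1)) => //; rewrite le_eqVlt; apply/orP; left; apply/eqP; ring.
Qed.

Lemma dco0 al s j : j \in s -> al j = 0 -> dco al s = 0.
Proof.
move=> + a0; elim: s => [|i s IH] //=; rewrite in_cons => /orP [/eqP ji|js].
  subst j; case: (boolP (i \in s)) => [/IH -> |nis]; first by rewrite mul0r.
  by have /count_memPn -> := nis; rewrite a0 subr0 mulr0.
by rewrite IH // mul0r.
Qed.

Lemma powR_prod (f : 'I_m -> R) p (s : seq 'I_m) : (forall j, 0 <= f j) ->
  (\prod_(j <- s) f j) `^ p = \prod_(j <- s) f j `^ p.
Proof.
move=> f0; elim: s => [|i s IH]; first by rewrite !big_nil powR1.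
rewrite !big_cons powRM ?IH //; exact: prodr_ge0.
Qed.

Lemma prod_count (x : 'rV[R]_m) (s : seq 'I_m) :
  \prod_(j < m) x 0 j ^+ count_mem j s = \prod_(i <- s) x 0 i.
Proof.
elim: s => [|i s IH]; first by rewrite big_nil; apply: big1 => j _; rewrite expr0.
rewrite big_cons -IH (bigD1 i) //= [in RHS](bigD1 i) //= eqxx add1n exprS mulrA.
congr (_ * _); apply: eq_bigr => j /negbTE ji.
by rewrite eq_sym ji add0n.
Qed.


Definition alp (n : 'I_m -> nat) (mu : 'I_m -> R) (k : nat) : 'I_m -> R :=
  fun j => (n j)%:R * mu j / k%:R.

Lemma prodpow (n : 'I_m -> nat) mu k (y : 'rV[R]_m) : pos y ->
  (\prod_(j < m) (y 0 j ^+ n j) `^ mu j) `^ (k%:R)^-1 =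
  \prod_(j < m) y 0 j `^ alp n mu k j.
Proof.
move=> py; rewrite powR_prod; last by move=> j; exact: powR_ge0.
apply: eq_bigr => j _; rewrite -powR_mulrn ?(ltW (py j)) // -!powRrM.
by rewrite /alp mulrA.
Qed.

Lemma g_eq a mu (n : 'I_m -> nat) k (y : 'rV[R]_m) : pos y ->
  kroot k (monomial a mu \o phi_map n) y =
  Fm (Num.sg a * `|a| `^ (k%:R)^-1) (alp n mu k) y.
Proof.
move=> py; rewrite /kroot /= /monomial.
rewrite (eq_bigr (fun j => (y 0 j ^+ n j) `^ mu j)); last by move=> j _; rewrite mxE.
set P := \prod_(j < m) _.
have P0 : 0 < P by apply: prodr_gt0 => j _; apply: powR_gt0; exact: exprn_gt0.
rewrite sgrM (gtr0_sg P0) mulr1 normrM (gtr0_norm P0) powRM ?normr_ge0 ?(ltW P0) //.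
by rewrite prodpow // /Fm mulrA.
Qed.

Lemma prod_sub1 (y : 'rV[R]_m) mu i : pos y ->
  \prod_(j < m) y 0 j `^ mu j = y 0 i * \prod_(j < m) y 0 j `^ (mu j - (j == i)%:R).
Proof.
move=> py; rewrite (bigD1 i) //= [in RHS](bigD1 i) //= eqxx.
have -> : \prod_(j < m | j != i) y 0 j `^ (mu j - (j == i)%:R) =
          \prod_(j < m | j != i) y 0 j `^ mu j.
  by apply: eq_bigr => j /negbTE ->; rewrite subr0.
have y0 : y 0 i != 0 by rewrite gt_eqF.
rewrite powRB ?y0 ?implybT // powRr1 ?(ltW (py i)) // mulrA.
by congr (_ * _); rewrite mulrC divfK.
Qed.


End S.
Arguments pos {R m}.
Arguments Fm {R m}.
Arguments dco {R m}.
Arguments bet {R m}.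
Arguments alp {R m}.
Arguments ipartial_reg {R m}.
Arguments ipartial_eq {R m}.
Arguments g_eq {R m}.
Arguments pderivE {R m}.
Arguments dco_bound {R m}.
Arguments dco0 {R m}.
Arguments Fm_partial {R m}.
Arguments prod_sub1 {R m}.

Section S3.
Variables (R : realType) (m : nat).
Lemma keybound (a : R) (mu : 'I_m -> R) (n : 'I_m -> nat) (k r : nat) (x : 'rV[R]_m) (s : seq 'I_m) (M' : R) :
  (0 < k)%N -> (0 < r)%N -> (forall j, 0 < x 0 j <= 1) -> (forall j, (k * r <= n j)%N) ->
  1 <= M' ->
  `|a| * \prod_(j < m) (x 0 j ^+ n j) `^ mu j <= M' ->
  (forall j, j \in s -> `|a| * \prod_(j < m) (x 0 j ^+ n j) `^ mu j <= M' * x 0 j ^+ n j) ->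
  (size s <= r)%N ->
  `|a| `^ (k%:R)^-1 * \prod_(j < m) x 0 j `^ bet (alp n mu k) s j <= M'.
Proof.
move=> k0 r0 hx hn M1.
set T := `|a| * _ => TM Ts sr.
have px : pos x by move=> j; case/andP: (hx j).
have M0 : 0 < M' by apply: lt_le_trans M1.
have T0 : 0 <= T by apply: mulr_ge0 => //; apply: prodr_ge0 => j _; exact: powR_ge0.
have E1 : \prod_(j < m) x 0 j `^ bet (alp n mu k) s j =
   (\prod_(j < m) x 0 j `^ alp n mu k j) / \prod_(i <- s) x 0 i.
  rewrite -prod_count -prodfV -big_split /=; apply: eq_bigr => j _.
  by rewrite /bet powRB ?(lt0r_neq0 (px j)) ?implybT // powR_mulrn // ltW.
have Ps : 0 < \prod_(i <- s) x 0 i by apply: prodr_gt0 => i _.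
have E2 : `|a| `^ (k%:R)^-1 * \prod_(j < m) x 0 j `^ alp n mu k j = T `^ (k%:R)^-1.
  by rewrite /T powRM ?normr_ge0 ?prodpow //; apply: prodr_ge0 => j _; exact: powR_ge0.
rewrite E1 mulrA E2 ler_pdivrMr //.
set t := T / M'.
have Tt : T = M' * t by rewrite /t mulrC divfK ?gt_eqF.
have t0 : 0 <= t by rewrite /t divr_ge0 // ltW.
have t1 : t <= 1 by rewrite /t ler_pdivrMr // mul1r.
have ts : forall j, j \in s -> t <= x 0 j ^+ n j.
  by move=> j js; rewrite /t ler_pdivrMr // mulrC; exact: Ts.
have kr0 : (0 < k * r)%N by rewrite muln_gt0 k0 r0.
set sg := t `^ ((k * r)%:R)^-1.
have sg0 : 0 <= sg by exact: powR_ge0.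
have hsg : sg ^+ (k * r) = t.
  rewrite -powR_mulrn // -powRrM mulVf ?powRr1 // pnatr_eq0 -lt0n //.
have sg1 : sg <= 1.
  by rewrite -(ler_pXn2r kr0) ?nnegrE // hsg expr1n.
have sgx : forall j, j \in s -> sg <= x 0 j.
  move=> j js; rewrite -(ler_pXn2r kr0) ?nnegrE ?(ltW (px j)) // hsg.
  apply: le_trans (ts j js) _; apply: ler_wiXn2l => //; first exact: ltW.
  by case/andP: (hx j).
have tk : t `^ (k%:R)^-1 = sg ^+ r.
  rewrite -hsg -powR_mulrn // -powRrM -powR_mulrn //; congr (_ `^ _).
  by rewrite natrM; field; rewrite pnatr_eq0 -lt0n.
have Hsr : sg ^+ r <= sg ^+ size s by exact: ler_wiXn2l.
have Hss : sg ^+ size s <= \prod_(i <- s) x 0 i.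
  elim: s sgx {E1 Ps Ts sr Hsr ts} => [|i s IH] sgx; first by rewrite big_nil expr0.
  rewrite big_cons /= exprS; apply: ler_pM => //; first exact: exprn_ge0.
    by apply: sgx; rewrite mem_head.
  by apply: IH => j js; apply: sgx; rewrite in_cons js orbT.
rewrite Tt powRM ?(ltW M0) // tk.
have Mk : M' `^ (k%:R)^-1 <= M'.
  apply: ler1_powR => //; rewrite invf_le1 ?ler1n ?ltr0n //.
apply: le_trans (ler_pM _ _ Mk (le_trans Hsr Hss)) _ => //.
- exact: powR_ge0.
- exact: exprn_ge0.
Qed.


End S3.
Arguments keybound {R m}.

Section S2.
Variables (R : realType) (m : nat).
Lemma size_flat (nu : 'I_m -> nat) :
  size (flatten [seq nseq (nu i) i | i <- enum 'I_m]) = mabs nu.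
Proof.
rewrite size_flatten /shape -map_comp /mabs sumnE big_map enumT /index_enum /=. apply: eq_bigr => i _; by rewrite size_nseq.
Qed.

Lemma sum_ge_term (f : 'I_m -> R) j : (forall i, 0 <= f i) -> f j <= \sum_(i < m) f i.
Proof. by move=> f0; rewrite (bigD1 j) //= lerDl sumr_ge0. Qed.

End S2.
Arguments size_flat {m}.
Arguments sum_ge_term {R m}.

Theorem mainTheorem4 (R : realType) (m : nat) (U : set 'rV[R]_m)
  (a : R) (mu : 'I_m -> R) :
  open U -> U `<=` @unit_cube R m ->
  C1_bounded U (monomial a mu) ->
  exists A B : R, 0 < A /\ 0 < B /\
    forall (r l : nat) (n : 'I_m -> nat), (0 < r)%N -> (1 <= l)%N ->
      (forall i, (r ^ l <= n i)%N) ->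
      mild (@unit_cube R m `&` (phi_map n @^-1` U))
        ((\max_(i < m) n i)%:R * A) B 0 r
        (kroot (r ^ l.-1) (monomial a mu \o phi_map n)).
Proof.
move=> oU sU [CrU [M HM]].
set A := 1 + \sum_(j < m) `|mu j|.
set B := 1 + `|M| + \sum_(j < m) `|M| / `|mu j|.
have SA : 0 <= \sum_(j < m) `|mu j| by apply: sumr_ge0 => j _.
have SB : 0 <= \sum_(j < m) `|M| / `|mu j| by apply: sumr_ge0 => j _; apply: divr_ge0.
have A0 : 0 < A by rewrite /A; apply: (lt_le_trans ltr01); rewrite lerDl.
have B1 : 1 <= B by rewrite /B -addrA lerDl; apply: addr_ge0.
have B0 : 0 < B by apply: lt_le_trans B1.
exists A, B; split => //; split => //.
move=> r l n r0 l1 hn.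
set k := (r ^ l.-1)%N.
have k0 : (0 < k)%N by rewrite /k expn_gt0 r0.
have hkr : forall j, (k * r <= n j)%N by move=> j; rewrite /k -expnSr prednK.
set c0 := Num.sg a * `|a| `^ (k%:R)^-1.
set g := kroot k (monomial a mu \o phi_map n).
have Hg : forall y, pos y -> g y = Fm c0 (alp n mu k) y.
  by move=> y py; rewrite /g g_eq.
have cube_pos : forall x : 'rV[R]_m, @unit_cube R m x -> pos x by move=> x cx j; case/andP: (cx j).
split.
  move=> s sr; split.
    by move=> x [cx _]; exact: (proj1 (ipartial_reg _ _ _ Hg s _ (cube_pos x cx))).
  by move=> _ x [cx _] i; exact: (proj2 (ipartial_reg _ _ _ Hg s _ (cube_pos x cx)) i).
move=> x [cx Ux] nu hnu.
have px := cube_pos x cx.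
rewrite pderivE (ipartial_eq _ _ _ Hg _ _ px).
set s := flatten _.
have ss : size s = mabs nu by exact: size_flat.
rewrite add0r powRr1 ?(ltW B0) // powRr1 ?ler0n //.
set al := alp n mu k.
set nmax := \max_(i < m) n i.
have RHS0 : 0 <= B * (nmax%:R * A) ^+ mabs nu * (mabs nu)`!%:R.
  by apply: mulr_ge0; [apply: mulr_ge0; [exact: ltW | apply: exprn_ge0; apply: mulr_ge0 => //; exact: ltW] | exact: ler0n].
have hE : forall j, `|al j| + 1 <= nmax%:R * A.
  move=> j.
  have nj : (n j <= nmax)%N by exact: (leq_bigmax j).
  have n1 : (1 <= n j)%N by apply: leq_trans (hn j); rewrite expn_gt0 r0.
  have h1 : `|al j| <= (n j)%:R * `|mu j|.
    rewrite /al /alp normrM normfV !normr_nat normrM normr_nat ler_pdivrMr ?ltr0n //.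
    apply: ler_peMr; first by apply: mulr_ge0 => //; exact: ler0n.
    by rewrite ler1n.
  have h2 : (n j)%:R <= nmax%:R :> R by rewrite ler_nat.
  have h3 : 1 <= (n j)%:R :> R by rewrite ler1n.
  have h4 : `|mu j| <= \sum_(i < m) `|mu i| by apply: sum_ge_term => i.
  have h5 := normr_ge0 (mu j).
  rewrite /A; nra.
case: (boolP [exists j, (j \in s) && (mu j == 0)]).
  move/existsP => [j /andP [js /eqP mj]].
  rewrite (dco0 al s j js); last by rewrite /al /alp mj mulr0 mul0r.
  by rewrite mulr0 /Fm mul0r normr0.
move/existsPn => H.
have nz : forall j, j \in s -> mu j != 0.
  by move=> j js; have := H j; rewrite js /=.
set y := phi_map n x.
have yE : forall j, y 0 j = x 0 j ^+ n j by move=> j; rewrite mxE.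
have py : pos y by move=> j; rewrite yE; exact: exprn_gt0.
have [HM1 HM2] := HM y Ux.
set T := `|a| * \prod_(j < m) (x 0 j ^+ n j) `^ mu j.
have Pmu : \prod_(j < m) y 0 j `^ mu j = \prod_(j < m) (x 0 j ^+ n j) `^ mu j.
  by apply: eq_bigr => j _; rewrite yE.
have Tmon : `|monomial a mu y| = T.
  rewrite /monomial normrM Pmu [X in _ * X]ger0_norm //.
  by apply: prodr_ge0 => j _; exact: powR_ge0.
have TB : T <= B.
  rewrite -Tmon; apply: (le_trans HM1); apply: (le_trans (ler_norm M)).
  by rewrite /B; have := normr_ge0 M; lra.
have Ts : forall j, j \in s -> T <= B * x 0 j ^+ n j.
  move=> j js.
  have [_ P] := Fm_partial a mu j y py.
  have := HM2 j; rewrite (_ : monomial a mu = Fm a mu) // P /Fm.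
  set Q := \prod_(i < m) _ => HQ.
  have Q0 : 0 <= Q by apply: prodr_ge0 => i _; exact: powR_ge0.
  have muj : 0 < `|mu j| by rewrite normr_gt0; exact: nz.
  rewrite /T -Pmu (prod_sub1 y mu j py) -/Q -yE.
  have h1 : `|a| * Q <= `|M| / `|mu j|.
    rewrite ler_pdivlMr //; apply: le_trans (ler_norm M).
    by apply: le_trans HQ; rewrite !normrM (ger0_norm Q0) le_eqVlt; apply/orP; left; apply/eqP; ring.
  have h2 : `|M| / `|mu j| <= B.
    apply: le_trans (sum_ge_term (fun i => `|M| / `|mu i|) j _) _.
      by move=> i; apply: divr_ge0.
    by rewrite /B; have := normr_ge0 M; lra.
  have yj := py j.
  have := le_trans h1 h2; have := normr_ge0 a; nra.
have hx : forall j, 0 < x 0 j <= 1.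
  by move=> j; case/andP: (cx j) => -> /ltW ->.
have sr : (size s <= r)%N by rewrite ss.
have KB := keybound a mu n k r x s B k0 r0 hx hkr B1 TB Ts sr.
have DB := dco_bound al s (nmax%:R * A) hE.
rewrite ss in DB.
set P := \prod_(j < m) x 0 j `^ bet al s j.
have P0 : 0 <= P by apply: prodr_ge0 => j _; exact: powR_ge0.
have c0a : `|c0| <= `|a| `^ k%:R^-1.
  rewrite /c0 normrM normr_sg ger0_norm ?powR_ge0 //.
  by case: (a != 0) => /=; rewrite ?mul1r ?mul0r //; exact: powR_ge0.
rewrite /Fm -/P normrM normrM (ger0_norm P0).
have cP : `|c0| * P <= B := le_trans (ler_wpM2r P0 c0a) KB.
apply: (@le_trans _ _ (`|dco al s| * B)).
  by rewrite mulrAC mulrC; apply: ler_wpM2l cP.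
by rewrite mulrC -mulrA; apply: ler_wpM2l DB; exact: ltW.
Qed.
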